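(* Let $k$ be a field and $V$ a $k$-vector space of dimension $n>2$. Define $b:V\times V\to V\wedge V$ by $b(u,v)=u\wedge v$. Then $b$ is alternating and $\operatorname{Adj}(b)=\{\lambda 1_V:\lambda\in k\}\cong k$ with trivial involution; that is, $b$ is $\perp$-indecomposable of orthogonal type.
   Context: $\operatorname{Adj}(b)$ is the set of $f\in\operatorname{End}V$ for which there is $f^*\in\operatorname{End}V$ with $b(uf,v)=b(u,vf^* )$ for all $u,v\in V$, with involution $f\mapsto f^*$. A bilinear map is $\perp$-indecomposable if $V$ has no decomposition into a set $\mathcal{X}\neq\{V\}$ of pairwise $b$-orthogonal subspaces generating $V$ with no proper subset generating $V$; orthogonal type means $\operatorname{Adj}(b)$ modulo its Jacobson radical is a field with trivial involution. *)

(* Defs.v *)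
(* V = 'rV[k]_n (row vectors), End V = 'M[k]_n acting on the
   right (u f := u *m f), as in the paper. *)
From mathcomp Require Import all_boot all_order all_algebra.
Set Implicit Arguments. Unset Strict Implicit. Unset Printing Implicit Defensive.
Import GRing.Theory.
Local Open Scope ring_scope.

Section Defs.
Variables (k : fieldType) (n : nat).

(* u /\ v in V /\ V, realised (injectively and linearly) inside 'M[k]_n as the
   alternating matrix u^T v - v^T u (the standard iso Lambda^2 V ~ alternating
   matrices, valid in every characteristic). *)
Definition wedge (u v : 'rV[k]_n) : 'M[k]_n := u^T *m v - v^T *m u.

Variable W : zmodType.
Variable b : 'rV[k]_n -> 'rV[k]_n -> W.

Definition is_adj (f g : 'M[k]_n) : Prop :=
  forall u v : 'rV[k]_n, b (u *m f) v = b u (v *m g).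

Definition in_Adj (f : 'M[k]_n) : Prop := exists g, is_adj f g.

(* Jacobson radical of the (unital) algebra Adj(b):
   x in J iff x in Adj(b) and 1 - a x is invertible in Adj(b) for all a in Adj(b). *)
Definition in_Jrad (x : 'M[k]_n) : Prop :=
  in_Adj x /\
  forall a, in_Adj a ->
    exists y, in_Adj y /\ y *m (1%:M - a *m x) = 1%:M
                      /\ (1%:M - a *m x) *m y = 1%:M.

(* Orthogonal type: Adj(b)/J(Adj(b)) is a field with trivial involution,
   written out elementwise modulo J. *)
Definition orthogonal_type : Prop :=
  ~ in_Jrad 1%:M /\
  (forall f g, in_Adj f -> in_Adj g -> in_Jrad (f *m g - g *m f)) /\
  (forall f, in_Adj f -> ~ in_Jrad f ->
     exists g, in_Adj g /\ in_Jrad (f *m g - 1%:M)) /\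
  (* the induced involution f + J |-> f^* + J is trivial *)
  (forall f g, is_adj f g -> in_Jrad (g - f)).

(* perp-decomposition: a finite family X of subspaces of V (row spaces of
   n x n matrices), pairwise b-orthogonal, generating V, and irredundant
   (no proper subfamily generates V). *)
Definition perp_decomposition (m : nat) (X : 'I_m -> 'M[k]_n) : Prop :=
  (forall i j : 'I_m, i != j ->
     forall u v : 'rV[k]_n, (u <= X i)%MS -> (v <= X j)%MS -> b u v = 0) /\
  (\sum_(i < m) X i == 1%:M)%MS /\
  (forall P : {set 'I_m}, P != setT -> ~~ (\sum_(i in P) X i == 1%:M)%MS).

Definition perp_indecomposable : Prop :=
  forall (m : nat) (X : 'I_m -> 'M[k]_n), perp_decomposition X ->
    m = 1%N /\ forall i, (X i == 1%:M)%MS.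

End Defs.

(* Main.v *)
Require Import Defs.
From mathcomp Require Import all_boot all_order all_algebra ring.
From mathcomp Require Import zify.
Import GRing.Theory.
Set Implicit Arguments. Unset Strict Implicit.
Local Open Scope ring_scope.

Lemma wedgeE (k : fieldType) n (u v : 'rV[k]_n) a b :
  wedge u v a b = u 0 a * v 0 b - v 0 a * u 0 b.
Proof. by rewrite /wedge !mxE !big_ord1 !mxE. Qed.

Lemma third n (hn : (2 < n)%N) (i j : 'I_n) : exists l : 'I_n, l != i /\ l != j.
Proof.
have := cardsC [set i; j]; rewrite cards2 card_ord => H.
have : (0 < #|~: [set i; j]|)%N by move: H; case: (i != j) => /=; lia.
case/card_gt0P => l; rewrite !inE negb_or => /andP[H1 H2]; by exists l.
Qed.

Arguments third {n}.
Lemma delta_mulE (k : fieldType) n (f : 'M[k]_n) i a :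
  ((delta_mx 0 i : 'rV[k]_n) *m f) 0 a = f i a.
Proof. by rewrite -rowE mxE. Qed.

Lemma adj_scalar (k : fieldType) n (hn : (2 < n)%N) (f g : 'M[k]_n) :
  is_adj (@wedge k n) f g -> exists c, f = c%:M /\ g = c%:M.
Proof.
move=> Hadj.
have H : forall i j a b : 'I_n,
  f i a * (j == b)%:R - (j == a)%:R * f i b = (i == a)%:R * g j b - g j a * (i == b)%:R.
  move=> i j a b; have := congr1 (fun M : 'M[k]_n => M a b) (Hadj (delta_mx 0 i) (delta_mx 0 j)).
  rewrite /= !wedgeE !delta_mulE !mxE /= => E; by rewrite (eq_sym j b) (eq_sym j a) (eq_sym i a) (eq_sym i b).
have foff : forall i a, i != a -> f i a = 0.
  move=> i a ia; have [j [ji ja]] := third hn i a.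
  have := H i j a j; rewrite eqxx (negbTE ja) (negbTE ia) eq_sym (negbTE ji).
  rewrite /= ?mulr1 ?mul0r ?mulr0 ?mul1r ?subr0 ?sub0r ?subrr; by [].
have goff : forall j a, j != a -> g j a = 0.
  move=> j a ja; have [i [ij ia]] := third hn j a.
  have := H i j a i; rewrite eqxx (negbTE ia) (negbTE ja) eq_sym (negbTE ij).
  rewrite /= ?mulr1 ?mul0r ?mulr0 ?mul1r ?subr0 ?sub0r ?subrr => /eqP; by rewrite eq_sym oppr_eq0 => /eqP.
have diag : forall i j, i != j -> f i i = g j j.
  move=> i j ij; have := H i j i j; rewrite !eqxx (negbTE ij) eq_sym (negbTE ij).
  rewrite /= ?mulr1 ?mul0r ?mulr0 ?mul1r ?subr0 ?sub0r ?subrr; by [].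
have o0 : 'I_n := Ordinal (ltn_trans (isT : (0 < 2)%N) hn).
have fd : forall i, f i i = f o0 o0.
  move=> i; have [j [ji jo]] := third hn i o0.
  by rewrite (diag i j) 1?eq_sym // (diag o0 j) // eq_sym.
exists (f o0 o0); split; apply/matrixP => i a; rewrite mxE.
  have [<-|ia] := eqVneq i a; last by rewrite foff.
  by rewrite /= mulr1n fd.
have [<-|ia] := eqVneq i a; last by rewrite goff.
have [j [ji jo]] := third hn i o0.
by rewrite /= mulr1n -(diag j i) // fd.
Qed.

Lemma scalar_adj (k : fieldType) n (c : k) : is_adj (@wedge k n) c%:M c%:M.
Proof.
move=> u v; apply/matrixP => a b; rewrite !wedgeE !mul_mx_scalar !mxE; ring.
Qed.

Lemma par_sub (k : fieldType) n (u v : 'rV[k]_n) :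
  wedge v u = 0 -> u != 0 -> (v <= u)%MS.
Proof.
move=> H Hu; have : [exists a, u 0 a != 0].
  apply: contraNT Hu => /existsPn Hall; apply/eqP/rowP => a; rewrite mxE.
  exact/eqP/negPn/Hall.
case/existsP => a Ha.
have -> : v = (v 0 a / u 0 a) *: u.
  apply/rowP => b; rewrite mxE.
  have := congr1 (fun M : 'M[k]_n => M a b) H; rewrite /= wedgeE !mxE => /eqP.
  rewrite subr_eq0 => /eqP E.
  apply: (mulfI Ha); rewrite -E. field.
  by [].
exact: scalemx_sub (submx_refl u).
Qed.

Lemma in_Adj_iff (k : fieldType) n (hn : (2 < n)%N) (f : 'M[k]_n) :
  in_Adj (@wedge k n) f <-> exists l : k, f = l%:M.
Proof.
split; first by case=> g /(adj_scalar hn) [c [-> _]]; exists c.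
by case=> l ->; exists l%:M; apply: scalar_adj.
Qed.

Lemma scalar_mx0' (k : fieldType) n : (0 : k)%:M = 0 :> 'M[k]_n.
Proof. by apply/matrixP => i j; rewrite !mxE mul0rn. Qed.

Lemma Jrad0 (k : fieldType) n (hn : (2 < n)%N) : in_Jrad (@wedge k n) 0.
Proof.
split; first by apply/(in_Adj_iff hn); exists 0; rewrite scalar_mx0'.
move=> a _; exists 1%:M; split; first by apply/(in_Adj_iff hn); exists 1.
by rewrite mulmx0 subr0 mulmx1.
Qed.

Lemma one_neq0 (k : fieldType) n (hn : (0 < n)%N) : (1%:M : 'M[k]_n) != 0.
Proof.
apply/eqP => /matrixP /(_ (Ordinal hn) (Ordinal hn)); rewrite !mxE eqxx /=.
by move/eqP; rewrite oner_eq0.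
Qed.

Lemma Jrad_eq0 (k : fieldType) n (hn : (2 < n)%N) x :
  in_Jrad (@wedge k n) x -> x = 0.
Proof.
case=> /(in_Adj_iff hn) [c ->] H.
have [->|c0] := eqVneq c 0; first by rewrite scalar_mx0'.
have [y [_ [Hy _]]] := H (c^-1)%:M (proj2 (in_Adj_iff hn _) (ex_intro _ _ erefl)).
move: Hy; rewrite -scalar_mxM mulVf // subrr mulmx0 => /eqP.
rewrite eq_sym (negbTE (one_neq0 _ _)) //; exact: ltn_trans hn.
Qed.

Lemma nz_row (k : fieldType) m n (A : 'M[k]_(m, n)) : A != 0 -> exists r, row r A != 0.
Proof.
move=> HA; have : [exists r, row r A != 0].
  apply: contraNT HA => /existsPn Hall; apply/eqP/row_matrixP => r.
  by rewrite row0; exact/eqP/negPn/Hall.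
by case/existsP => r Hr; exists r.
Qed.

Lemma indec (k : fieldType) n (hn : (2 < n)%N) : perp_indecomposable (@wedge k n).
Proof.
move=> m X [orth [full irr]].
have nz : forall j, X j != 0.
  move=> j; apply/negP => /eqP Xj.
  have Hne : [set~ j] != setT.
    apply/eqP => E; have := in_setT j; by rewrite -E !inE eqxx.
  apply: (negP (irr _ Hne)).
  rewrite (bigD1 j) //= Xj adds0mx_id in full.
  by rewrite (eq_bigl (fun i => i != j)) // => i; rewrite !inE.
have hn0 : (0 < n)%N by exact: ltn_trans hn.
case: m X orth full irr nz => [|[|m]] X orth full irr nz.
- move: full; rewrite big_ord0 => /andP[_ /mxrankS]; rewrite mxrank1 mxrank0.
  move: hn0; lia.
- split=> // i; rewrite big_ord1 in full; by rewrite (ord1 i).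
exfalso.
have ortho : forall (i j : 'I_m.+2) (r : 'I_n), i != j -> row r (X j) != 0 ->
    (X i <= row r (X j))%MS.
  move=> i j r ij Hr; apply/row_subP => s.
  exact: par_sub (orth i j ij _ _ (row_sub s _) (row_sub r _)) Hr.
have o01 : (ord0 : 'I_m.+2) != ord_max by [].
have [r Hr] := nz_row (nz ord0).
have [w Hw] := nz_row (nz ord_max).
have all_sub : forall l, (X l <= row r (X ord0))%MS.
  move=> l; have [->|l0] := eqVneq l ord0; last exact: ortho l0 Hr.
  apply: submx_trans (ortho _ _ _ o01 Hw) _.
  apply: submx_trans (row_sub w (X ord_max)) _; apply: ortho Hr; by rewrite eq_sym.
move: full => /andP[_]; move/submx_trans => /(_ _ (row r (X ord0))).
have : (\sum_(i < m.+2) X i <= row r (X ord0))%MS.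
  by apply/sumsmx_subP => i _; exact: all_sub.
move=> H1 /(_ H1) /mxrankS; rewrite mxrank1 => H2.
have := leq_trans H2 (rank_leq_row _); move: hn; lia.
Qed.

Unset Implicit Arguments.

Theorem lemma7p1 (k : fieldType) (n : nat) (hn : (2 < n)%N) :
  (forall u : 'rV[k]_n, wedge u u = 0) /\
  (forall f : 'M[k]_n, in_Adj (@wedge k n) f <-> exists l : k, f = l%:M) /\
  (forall f g : 'M[k]_n, is_adj (@wedge k n) f g -> g = f) /\
  perp_indecomposable (@wedge k n) /\
  orthogonal_type (@wedge k n).
Proof.
have hn0 : (0 < n)%N by exact: ltn_trans hn.
split; first by move=> u; rewrite /wedge subrr.
split; first exact: in_Adj_iff.
split; first by move=> f g /(adj_scalar hn) [c [-> ->]].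
split; first exact: indec.
split; first by move/(Jrad_eq0 hn)/eqP; rewrite (negbTE (one_neq0 _ hn0)).
split.
  move=> f g /(in_Adj_iff hn) [a ->] /(in_Adj_iff hn) [b ->].
  by rewrite -!scalar_mxM mulrC subrr; exact: Jrad0.
split.
  move=> f /(in_Adj_iff hn) [c ->] HJ.
  have c0 : c != 0 by apply/eqP => c0; apply: HJ; rewrite c0 scalar_mx0'; exact: Jrad0.
  exists (c^-1)%:M; split; first by apply/(in_Adj_iff hn); exists c^-1.
  by rewrite -scalar_mxM mulfV // subrr; exact: Jrad0.
move=> f g /(adj_scalar hn) [c [-> ->]]; rewrite subrr; exact: Jrad0.
Qed.
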